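(* Let $X$ and $Y$ be objects of an $R$-linear triangulated category $\mathsf{T}$ with $\operatorname{Hom}^*_{\mathsf{T}}(X,Y)$ in $\mathsf{noeth}^{\mathsf{fl}}(R)$. Let $s=\operatorname{cx}(X,Y)$ and assume $e^s(X,Y)=0$. Then there exists an integer $m_0$ with the following property: if $\lambda^n(X,Y)=0$ for $d/2$ consecutive even values of $n\ge m_0$, or for $d/2$ consecutive odd values of $n\ge m_0$, then $\lambda^n(X,Y)=0$ for all $n\ge m_0$.
   Context: $R=\bigoplus_{n\ge 0}R^n$ is a graded-commutative Noetherian ring, generated over $R^0$ by $R^d$ for a fixed even integer $d\ge 2$ (standing assumption). $\mathsf{T}$ is a triangulated category with suspension $\Sigma$ which is $R$-linear: there is a graded ring homomorphism from $R$ to the graded center of $\mathsf{T}$ (degree-$n$ elements are natural transformations $\eta:\mathrm{id}\to\Sigma^n$ with $\eta\Sigma=(-1)^n\Sigma\eta$), making $\operatorname{Hom}^*_{\mathsf{T}}(X,Y)=\bigoplus_{n\in\mathbb{Z}}\operatorname{Hom}_{\mathsf{T}}(X,\Sigma^nY)$ a graded $R$-module. Set $\lambda^n(X,Y)=\ell_{R^0}\operatorname{Hom}_{\mathsf{T}}(X,\Sigma^nY)$. $\operatorname{Hom}^*_{\mathsf{T}}(X,Y)\in\mathsf{noeth}^{\mathsf{fl}}(R)$ means $\bigoplus_{n\ge n_0}\operatorname{Hom}_{\mathsf{T}}(X,\Sigma^nY)$ is Noetherian over $R$ for some $n_0$ and all $\lambda^n(X,Y)<\infty$. Hilbert polynomials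 $g_i\in\mathbb{Q}[t]$ satisfy $g_i(n)=\lambda^{dn+i}(X,Y)$ for $n\gg0$, $i=0,\dots,d-1$; $\operatorname{cx}(X,Y)=1+\max_i\deg g_i$ (zero polynomial has degree $-1$). $h(X,Y)(n)=\sum_{i=0}^{d-1}(-1)^{n+i}\lambda^{n+i}(X,Y)$; $\Delta^1f(n)=f(n+d)-f(n)$, $\Delta^0f=f$, $\Delta^sf=\Delta^1(\Delta^{s-1}f)$. For $s\ge\operatorname{cx}(X,Y)$: if $\operatorname{cx}(X,Y)\ge1$, $e^s(X,Y)=\Delta^{s-1}h(X,Y)(n)$ for $n\gg0$; if $\operatorname{cx}(X,Y)=0$ and $\lambda^n(X,Y)=0$ for $n\ll0$, $e^0(X,Y)=\sum_n(-1)^n\lambda^n(X,Y)$. *)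

(* Defs.v *)
From mathcomp Require Import all_boot all_order all_algebra.
Set Implicit Arguments. Unset Strict Implicit. Unset Printing Implicit Defensive.
Import Order.TTheory GRing.Theory Num.Theory.
Local Open Scope ring_scope.

Definition graded_ring (R : pzRingType) (Rd : nat -> R -> Prop) : Prop :=
  [/\ (forall n, Rd n 0),
      (forall n x y, Rd n x -> Rd n y -> Rd n (x - y)),
      Rd 0%N 1 &
      (forall m n x y, Rd m x -> Rd n y -> Rd (m + n)%N (x * y))] /\
  [/\
      (forall x : R, exists (N : nat) (c : nat -> R),
          (forall k, Rd k (c k)) /\ x = \sum_(k < N) c k) &
      (forall (N : nat) (c : nat -> R), (forall k, Rd k (c k)) ->
          \sum_(k < N) c k = 0 -> forall k, (k < N)%N -> c k = 0)].

Definition graded_commutative (R : pzRingType) (Rd : nat -> R -> Prop) : Prop :=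
  forall m n (x y : R), Rd m x -> Rd n y -> x * y = (-1) ^+ (m * n) * (y * x).

Definition left_ideal (R : pzRingType) (I : R -> Prop) : Prop :=
  [/\ I 0, (forall x y, I x -> I y -> I (x - y)) & (forall r x, I x -> I (r * x))].

Definition noetherian_ring (R : pzRingType) : Prop :=
  forall I : nat -> R -> Prop, (forall k, left_ideal (I k)) ->
    (forall k x, I k x -> I k.+1 x) ->
    exists N, forall k, (N <= k)%N -> forall x, I k x -> I N x.

Definition generated_in_degree (R : pzRingType) (Rd : nat -> R -> Prop) (d : nat) : Prop :=
  forall S : R -> Prop,
    (forall x y, S x -> S y -> S (x - y)) ->
    (forall x y, S x -> S y -> S (x * y)) ->
    (forall x, Rd 0%N x -> S x) -> (forall x, Rd d x -> S x) ->
    forall x, S x.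

Definition graded_module (R : pzRingType) (Rd : nat -> R -> Prop)
    (M : lmodType R) (Md : int -> M -> Prop) : Prop :=
  [/\ (forall n, Md n 0),
      (forall n x y, Md n x -> Md n y -> Md n (x - y)),
      (forall (k : nat) (n : int) r x, Rd k r -> Md n x -> Md (n + k%:Z) (r *: x)),
      (forall x : M, exists (a : int) (N : nat) (c : nat -> M),
          (forall i : nat, Md (a + i%:Z) (c i)) /\ x = \sum_(i < N) c i) &
      (forall (a : int) (N : nat) (c : nat -> M), (forall i : nat, Md (a + i%:Z) (c i)) ->
          \sum_(i < N) c i = 0 -> forall i, (i < N)%N -> c i = 0)].

Definition Mge (M : zmodType) (Md : int -> M -> Prop) (n0 : int) (x : M) : Prop :=
  exists (N : nat) (c : nat -> M),
    (forall i : nat, Md (n0 + i%:Z) (c i)) /\ x = \sum_(i < N) c i.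

Definition submodule (R : pzRingType) (M : lmodType R) (P : M -> Prop) : Prop :=
  [/\ P 0, (forall x y, P x -> P y -> P (x - y)) & (forall r x, P x -> P (r *: x))].

Definition noetherian_tail (R : pzRingType) (M : lmodType R) (Md : int -> M -> Prop)
    (n0 : int) : Prop :=
  forall P : nat -> M -> Prop,
    (forall k, submodule (P k)) -> (forall k x, P k x -> Mge Md n0 x) ->
    (forall k x, P k x -> P k.+1 x) ->
    exists N, forall k, (N <= k)%N -> forall x, P k x -> P N x.

Definition R0_submodule (R : pzRingType) (Rd : nat -> R -> Prop) (M : lmodType R)
    (Md : int -> M -> Prop) (n : int) (P : M -> Prop) : Prop :=
  [/\ (forall x, P x -> Md n x), P 0,
      (forall x y, P x -> P y -> P (x - y)) &
      (forall r x, Rd 0%N r -> P x -> P (r *: x))].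

Definition R0_chain (R : pzRingType) (Rd : nat -> R -> Prop) (M : lmodType R)
    (Md : int -> M -> Prop) (n : int) (l : nat) (P : nat -> M -> Prop) : Prop :=
  (forall i, (i <= l)%N -> R0_submodule Rd Md n (P i)) /\
  (forall i, (i < l)%N ->
     (forall x, P i x -> P i.+1 x) /\ (exists x, P i.+1 x /\ ~ P i x)).

Definition R0_length (R : pzRingType) (Rd : nat -> R -> Prop) (M : lmodType R)
    (Md : int -> M -> Prop) (n : int) (l : nat) : Prop :=
  (exists P, R0_chain Rd Md n l P) /\
  (forall l' P, R0_chain Rd Md n l' P -> (l' <= l)%N).

Definition hilbert_polys (d : nat) (lam : int -> nat) (g : 'I_d -> {poly rat}) : Prop :=
  exists N : nat, forall n : nat, (N <= n)%N -> forall i : 'I_d,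
    (g i).[n%:R] = ((lam ((d * n + i)%N)%:Z))%:R.

(* cx = 1 + max_i deg g_i, deg 0 = -1; since size p = deg p + 1 this is
   the maximum of the sizes *)
Definition complexity (d : nat) (g : 'I_d -> {poly rat}) : nat :=
  \max_(i < d) size (g i).

Definition sgnpar (n : int) : int := if odd `|n|%N then -1 else 1.

Definition hfun (d : nat) (lam : int -> nat) (n : int) : int :=
  \sum_(i < d) sgnpar (n + i%:Z) * (lam (n + i%:Z))%:Z.

Fixpoint Delta (d : nat) (s : nat) (f : int -> int) : int -> int :=
  match s with
  | 0%N => f
  | s'.+1 => fun n => Delta d s' f (n + d%:Z) - Delta d s' f n
  end.

(* e^s(X,Y) = 0 for s = cx(X,Y):
   - if s >= 1: Delta^(s-1) h (n) = 0 for n >> 0;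
   - if s = 0: lambda^n = 0 for n << 0 (so e^0 is defined) and
     sum_n (-1)^n lambda^n = 0 (a finite sum). *)
Definition e_vanishes (d : nat) (lam : int -> nat) (s : nat) : Prop :=
  if (0 < s)%N then
    exists N : int, forall n, N <= n -> Delta d s.-1 (hfun d lam) n = 0
  else
    exists (a : int) (L : nat),
      (forall n, (n < a \/ a + L%:Z < n) -> lam n = 0%N) /\
      \sum_(k < L.+1) sgnpar (a + k%:Z) * (lam (a + k%:Z))%:Z = 0.

(* Main.v *)
Require Import Defs.
From mathcomp Require Import all_boot all_order all_algebra.
From mathcomp Require Import polyrcf zify ring.
Import Order.TTheory GRing.Theory Num.Theory.
Local Open Scope ring_scope.
From mathcomp Require Import lra.
From mathcomp Require Import zify.
Local Open Scope ring_scope.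

Definition Dp (P : {poly rat}) : {poly rat} := P \Po ('X + 1%:P) - P.

Lemma Dp_horner P (x : rat) : (Dp P).[x] = P.[x + 1] - P.[x].
Proof. by rewrite /Dp hornerD hornerN horner_comp !hornerE. Qed.

Lemma DpMX Q c : Dp (Q * 'X + c%:P) = Dp Q * ('X + 1%:P) + Q.
Proof.
rewrite /Dp comp_polyD comp_polyM comp_polyX comp_polyC. ring.
Qed.

Lemma Dp_const c : Dp c%:P = 0.
Proof. by rewrite /Dp comp_polyC subrr. Qed.

Lemma Dp_key n : forall P : {poly rat}, (size P <= n.+2)%N ->
  (size (Dp P) <= n.+1)%N /\ (Dp P)`_n = n.+1%:R * P`_n.+1.
Proof.
elim: n => [|n IH] P; elim/(@poly_ind rat): P => [|Q c _].
- by move=> _; rewrite /Dp comp_poly0 subrr size_poly0 !coef0 mulr0.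
- move=> hs.
  have hQ : (size Q <= 1)%N.
    have [->|/negbTE Q0] := eqVneq Q 0; first by rewrite size_poly0.
    by move: hs; rewrite size_MXaddC Q0 /= ltnS.
  rewrite DpMX (size1_polyC hQ) Dp_const mul0r add0r.
  split; first exact: size_polyC_leq1.
  by rewrite coefD coefMX !coefC /= addr0 mul1r.
- by move=> _; rewrite /Dp comp_poly0 subrr size_poly0 !coef0 mulr0.
- move=> hs.
  have hQ : (size Q <= n.+2)%N.
    have [->|/negbTE Q0] := eqVneq Q 0; first by rewrite size_poly0.
    by move: hs; rewrite size_MXaddC Q0 /= ltnS.
  have [h1 h2] := IH Q hQ.
  rewrite DpMX; split.
    rewrite (leq_trans (size_polyD _ _)) // geq_max; apply/andP; split=> //.
    rewrite (leq_trans (size_polyMleq _ _)) // size_XaddC addn2 /=.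
    done.
  rewrite coefD mulrDr coefD mulr1 coefMX /= h2 (nth_default 0 h1) addr0.
  rewrite coefD coefMX /= coefC /= addr0 -[n.+2]addn1 natrD. ring.
Qed.

Lemma Dp_iter k : forall P : {poly rat}, (size P <= k.+1)%N ->
  iter k Dp P = (k`!%:R * P`_k)%:P.
Proof.
elim: k => [|k IH] P hP.
  by rewrite /= {1}(size1_polyC hP) mul1r.
rewrite iterSr; have [h1 h2] := @Dp_key k P hP.
rewrite IH // h2 factS natrM. congr (_%:P). ring.
Qed.

Lemma rat_arch (x : rat) : exists n : nat, x <= n%:R.
Proof.
exists (Num.Def.archi_bound `|x|).
exact: le_trans (ler_norm x) (ltW (archi_boundP (normr_ge0 x))).
Qed.

Lemma lc_pos (p : {poly rat}) (A : nat) :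
  (forall m : nat, (A <= m)%N -> 0 <= p.[m%:R]) -> p != 0 -> 0 < lead_coef p.
Proof.
move=> hA p0.
case: (ltrgtP 0 (lead_coef p)) => // [hneg|heq].
  have := @poly_pinfty_gt_lc _ (- p); rewrite lead_coefN oppr_gt0.
  case/(_ hneg) => x0 hx0.
  have [b hb] := rat_arch x0.
  have hm : x0 <= (maxn A b)%:R.
    by apply: (le_trans hb); rewrite ler_nat leq_maxr.
  have := hx0 _ hm; rewrite hornerN.
  have := hA (maxn A b) (leq_maxl _ _).
  lra.
by move: p0; rewrite -lead_coef_eq0 -heq eqxx.
Qed.

Lemma ev_pos (p : {poly rat}) : 0 < lead_coef p ->
  exists B : nat, forall m : nat, (B <= m)%N -> 0 < p.[m%:R].
Proof.
move=> hl; have [x0 hx0] := poly_pinfty_gt_lc hl.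
have [b hb] := rat_arch x0.
exists b => m hm.
apply: (lt_le_trans hl); apply: hx0.
by apply: (le_trans hb); rewrite ler_nat.
Qed.

Lemma Delta_poly (d : nat) (f : int -> int) (P : {poly rat}) (A : nat) :
  (forall m : nat, (A <= m)%N -> ((f (d * m)%N%:Z)%:~R : rat) = P.[m%:R]) ->
  forall k m, (A <= m)%N ->
    ((Delta d k f (d * m)%N%:Z)%:~R : rat) = (iter k Dp P).[m%:R].
Proof.
move=> hf; elim=> [|k IH] m hm /=; first exact: hf.
have e : ((d * m)%N%:Z + d%:Z) = (d * m.+1)%N%:Z by rewrite mulnS PoszD addrC.
rewrite intrB e IH ?(leq_trans hm) // IH // Dp_horner natr1.
done.
Qed.

Theorem theorem6p11
    (d : nat) (Hd2 : (2 <= d)%N) (Hdeven : ~~ odd d)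
    (R : pzRingType) (Rd : nat -> R -> Prop)
    (HR : graded_ring Rd) (HRc : graded_commutative Rd)
    (HRnoeth : noetherian_ring R) (HRgen : generated_in_degree Rd d)
    (M : lmodType R) (Md : int -> M -> Prop) (HM : graded_module Rd Md)
    (Hnoeth : exists n0 : int, noetherian_tail Md n0)
    (lam : int -> nat) (Hlam : forall n : int, R0_length Rd Md n (lam n))
    (g : 'I_d -> {poly rat}) (Hg : hilbert_polys lam g)
    (He : e_vanishes d lam (complexity g)) :
  exists m0 : int, forall n : int, m0 <= n ->
    (forall j : nat, (j < d %/ 2)%N -> lam (n + (2 * j)%N%:Z) = 0%N) ->
    forall k : int, m0 <= k -> lam k = 0%N.
Proof.
case: Hg => N hN.
have d0 : (0 < d)%N by apply: leq_trans Hd2.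
have lam0 : forall m : nat, (N <= m)%N -> forall i : 'I_d, g i = 0 ->
    lam (d * m + i)%N = 0%N.
  move=> m hm i gi; have := hN m hm i; rewrite gi horner0 => /esym/eqP.
  by rewrite pnatr_eq0 => /eqP.
have [s0|spos] := posnP (complexity g).
  have gz : forall i, g i = 0.
    move=> i; apply/eqP; rewrite -size_poly_eq0 -leqn0 -s0.
    exact: (leq_bigmax i).
  exists (d * N)%N%:Z => n _ _ [kk|kk] hk //.
  rewrite lez_nat in hk.
  have hq : (N <= kk %/ d)%N by rewrite leq_divRL // mulnC.
  have := lam0 _ hq (Ordinal (ltn_pmod kk d0)) (gz _).
  by rewrite /= mulnC -divn_eq.
set s := complexity g in spos He.
have hpos : forall i, g i != 0 -> 0 < lead_coef (g i).
  move=> i gi; apply: (@lc_pos _ N) => // m hm.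
  by rewrite hN // ler0n.
have hB : forall i : 'I_d, exists B : nat, forall m : nat, (B <= m)%N ->
    g i = 0 \/ 0 < (g i).[m%:R].
  move=> i; have [gi|gi] := eqVneq (g i) 0; first by exists 0%N; left.
  have [B hB] := @ev_pos _ (hpos i gi); exists B => m hm; right; exact: hB.
have [Bf hBf] := fin_all_exists hB.
set B := (\max_(i < d) Bf i)%N.
move: He; rewrite /e_vanishes spos => -[N2 hN2].
set MM := maxn N (maxn B `|N2|%N).
exists (d * MM)%N%:Z => n hn hyp k hk; exfalso.
case: n hn hyp => [nn|nn] hn hyp; last by [].
rewrite lez_nat in hn.
have hMN : (N <= MM)%N by rewrite leq_maxl.
have hMB : (B <= MM)%N by rewrite /MM (leq_trans _ (leq_maxr _ _)) // leq_maxl.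
have hMN2 : (`|N2|%N <= MM)%N by rewrite /MM (leq_trans _ (leq_maxr _ _)) // leq_maxr.
have hMd : (MM <= d * MM)%N by rewrite leq_pmull.
have zero : forall i : 'I_d, odd i = odd nn -> g i = 0.
  move=> i hi.
  have [e de] : exists e, d = (2 * e)%N.
    by exists d./2; rewrite -[d in LHS]odd_double_half (negbTE Hdeven) mul2n.
  have dq := divn_eq nn d.
  have rd := ltn_pmod nn d0.
  have hq : (MM <= nn %/ d)%N by rewrite leq_divRL // mulnC.
  have par : (i %% 2 = nn %% 2)%N by rewrite !modn2 hi.
  have ie := ltn_ord i.
  have [j [q' [hj [hjq hq']]]] : exists j q', [/\ (j < d %/ 2)%N,
      (nn + 2 * j = d * q' + i)%N & (nn %/ d <= q')%N].
    have d2 : (d %/ 2 = e)%N by rewrite de mulKn.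
    rewrite d2.
    move: (nn %/ d)%N (nn %% d)%N dq rd => q r dq rd.
    case: (leqP r i) => hri.
      exists ((i - r) %/ 2)%N, q; split; nia.
    exists ((d + i - r) %/ 2)%N, q.+1; split; nia.
  have := hyp j hj; rewrite -PoszD hjq => hl.
  have hq'N : (N <= q')%N by apply: leq_trans hMN (leq_trans hq hq').
  have := hN q' hq'N i; rewrite hl => hv.
  have : (Bf i <= q')%N.
    apply: leq_trans (leq_bigmax i) _; apply: leq_trans hMB (leq_trans hq hq').
  by case/(hBf i) => // ; rewrite hv ltxx.
set sig : rat := if odd nn then 1 else -1.
set G := sig *: \sum_(i < d) g i.
have hterm : forall m : nat, (N <= m)%N ->
    ((hfun d lam (d * m)%N%:Z)%:~R : rat) = G.[m%:R].
  move=> m hm.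
  rewrite /hfun rmorph_sum hornerZ horner_sum mulr_sumr; apply: eq_bigr => i _.
  rewrite -PoszD /sgnpar /= oddD oddM (negbTE Hdeven) /=.
  have [hi|hi] := eqVneq (odd i) (odd nn).
    by rewrite (zero i hi) horner0 mulr0 (lam0 m hm i (zero i hi)) mulr0.
  rewrite intrM (hN m hm i) /sig.
  by case: (odd i) (odd nn) hi => [] [].
have hsz : (size G <= s.-1.+1)%N.
  rewrite prednK //; apply: leq_trans (size_scale_leq _ _) _.
  exact: size_sum.
have hN2' : N2 <= (d * MM)%N%:Z.
  apply: (le_trans (ler_norm N2)); rewrite -abszE lez_nat.
  exact: leq_trans hMN2 hMd.
have hD := @Delta_poly d (hfun d lam) G N hterm (s.-1) MM hMN.
rewrite hN2 // Dp_iter // hornerC coefZ coef_sum in hD.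
have sig0 : sig != 0 by rewrite /sig; case: (odd nn).
have f0 : (s.-1)`!%:R != 0 :> rat by rewrite pnatr_eq0 -lt0n fact_gt0.
have [i0 hi0] := bigop.eq_bigmax (fun i : 'I_d => size (g i)) (ltac:(by rewrite card_ord)).
have hs0 : size (g i0) = s by rewrite -hi0.
have hge : forall i : 'I_d, 0 <= (g i)`_s.-1.
  move=> i; have := leq_bigmax (F := fun i : 'I_d => size (g i)) i.
  rewrite -/(complexity g) -/s leq_eqVlt => /orP[/eqP hs|hs].
    have gi : g i != 0 by rewrite -size_poly_eq0 hs -lt0n.
    by rewrite -hs -lead_coefE ltW // hpos.
  by rewrite nth_default // -ltnS prednK.
have hgt : 0 < (g i0)`_s.-1.
  have gi : g i0 != 0 by rewrite -size_poly_eq0 hs0 -lt0n.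
  by rewrite -hs0 -lead_coefE hpos.
have hsum : 0 < \sum_(i < d) (g i)`_s.-1.
  rewrite (bigD1 i0) //=.
  have : 0 <= \sum_(i < d | i != i0) (g i)`_s.-1 by apply: sumr_ge0 => i _; exact: hge.
  move: hgt; lra.
move: hD => /esym/eqP; rewrite mulf_eq0 (negbTE f0) mulf_eq0 (negbTE sig0) /=.
by rewrite gt_eqF.
Qed.
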